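(* Let $K(q,t)=\sum_{p\ge0}q^{2p^2}t^{2p(p-1)}(1+q^{8p+12}t^{8p+5})\prod_{j=1}^{p}\frac{1+q^{2j+4}t^{2j+1}}{1-q^{2j}t^{2j}}$, viewed as a power series in $q$ whose coefficients are polynomials in $t$. Then $K(q,-1)=\dfrac{1}{1-q^2}$ in $\mathbb{Z}[[q]]$; equivalently $\sum_{p\ge0}q^{2p^2}(1-q^{2p+2})(1-q^{2p+4})(1-q^{8p+12})=1-q^4$. *)

(* Defs.v *)
From HB Require Import structures.
From mathcomp Require Import all_boot all_order all_algebra.
Set Implicit Arguments. Unset Strict Implicit. Unset Printing Implicit Defensive.
Import Order.TTheory GRing.Theory Num.Theory.
Local Open Scope ring_scope.

(* R[[q]] : coefficient n is the coefficient of q^n *)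
Definition fps (R : nzRingType) := nat -> R.

Section FPS.
Variable R : nzRingType.

Definition fps_one : fps R := fun n => (n == 0%N)%:R.
Definition fps_mon (a : nat) (c : R) : fps R := fun n => if n == a then c else 0.
Definition fps_add (f g : fps R) : fps R := fun n => f n + g n.
Definition fps_opp (f : fps R) : fps R := fun n => - f n.
Definition fps_mul (f g : fps R) : fps R :=
  fun n => \sum_(i < n.+1) f i * g (n - i)%N.
Definition fps_exp (f : fps R) (k : nat) : fps R := iter k (fps_mul f) fps_one.

(* 1/(1 - f) = \sum_k f^k, for f with zero constant term (then only the
   terms k <= n contribute to the coefficient of q^n). *)
Definition fps_inv1m (f : fps R) : fps R :=
  fun n => \sum_(k < n.+1) fps_exp f k n.

(* q-adically convergent sum \sum_{p >= 0} F p, for a family with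
   valuation (F p) >= p (so only p <= n contribute to the coefficient
   of q^n). *)
Definition fps_sum (F : nat -> fps R) : fps R :=
  fun n => \sum_(p < n.+1) F p n.

End FPS.

Definition fps_map (R S : nzRingType) (phi : R -> S) (f : fps R) : fps S :=
  fun n => phi (f n).

(* The series K(q,t) in Z[t][[q]], coefficient ring {poly int} (variable t). *)
Definition t_pow (k : nat) : {poly int} := 'X^k.

Definition K_factor (j : nat) : fps {poly int} :=
  fps_mul (fps_add (fps_one _) (fps_mon (2 * j + 4) (t_pow (2 * j + 1))))
          (fps_inv1m (fps_mon (2 * j) (t_pow (2 * j)))).

Definition K_term (p : nat) : fps {poly int} :=
  fps_mul (fps_mon (2 * p ^ 2) (t_pow (2 * p * (p - 1))))
   (fps_mul (fps_add (fps_one _) (fps_mon (8 * p + 12) (t_pow (8 * p + 5))))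
      (\big[@fps_mul _/fps_one _]_(1 <= j < p.+1) K_factor j)).

Definition K : fps {poly int} := fps_sum K_term.

Definition K_at_minus1 : fps int := fps_map (fun P : {poly int} => P.[-1]) K.

(* Main.v *)
Require Import Defs.
From HB Require Import structures.
From mathcomp Require Import all_boot all_order all_algebra.
From mathcomp Require Import zify ring.
Import Order.TTheory GRing.Theory Num.Theory.
Set Implicit Arguments. Unset Strict Implicit. Unset Printing Implicit Defensive.
Local Open Scope ring_scope.

Section Approx.
Variable R : nzRingType.
Variable N : nat.

Definition approx (f : fps R) (P : {poly R}) := forall m, (m <= N)%N -> f m = P`_m.

Lemma approx_one : approx (fps_one R) 1.
Proof. by move=> m _; rewrite coef1. Qed.

Lemma approx_mon a c : approx (fps_mon a c) (c%:P * 'X^a).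
Proof.
move=> m _; rewrite coefCM coefXn /fps_mon.
by case: eqP => _; rewrite ?mulr1 ?mulr0.
Qed.

Lemma approx_add f g P Q : approx f P -> approx g Q -> approx (fps_add f g) (P + Q).
Proof. by move=> hf hg m hm; rewrite coefD /fps_add hf // hg. Qed.

Lemma approx_mul f g P Q : approx f P -> approx g Q -> approx (fps_mul f g) (P * Q).
Proof.
move=> hf hg m hm; rewrite coefM /fps_mul; apply: eq_bigr => i _.
move: (ltn_ord i) => hi; rewrite hf ?hg //; lia.
Qed.

Lemma approx_exp f P k : approx f P -> approx (fps_exp f k) (P ^+ k).
Proof.
move=> hf; elim: k => [|k IH]; first exact: approx_one.
by rewrite exprS /fps_exp iterS; apply: approx_mul.
Qed.

Lemma coef_exp_small (P : {poly R}) k m : P`_0 = 0 -> (m < k)%N -> (P ^+ k)`_m = 0.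
Proof.
move=> h0; elim: k m => [//|k IH] m hm.
rewrite exprS coefM big1 // => [[i hi]] _ /=.
case: i hi => [|i] hi; first by rewrite h0 mul0r.
rewrite IH ?mulr0 //; lia.
Qed.

Lemma big_extend (F : nat -> R) m : (m <= N)%N ->
  (forall k, (m < k)%N -> F k = 0) ->
  \sum_(k < m.+1) F k = \sum_(k < N.+1) F k.
Proof.
move=> hm hF; rewrite -!(big_mkord xpredT) [in RHS](big_cat_nat _ (n:=m.+1)) //=.
by rewrite [X in _ + X]big1_seq ?addr0 // => k /andP[_]; rewrite mem_index_iota => /andP[h _]; apply: hF.
Qed.

Lemma approx_inv1m f P : approx f P -> P`_0 = 0 ->
  approx (fps_inv1m f) (\sum_(k < N.+1) P ^+ k).
Proof.
move=> hf h0 m hm; rewrite coef_sum /fps_inv1m.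
rewrite (eq_bigr (fun k : 'I_m.+1 => (P ^+ k)`_m)); last first.
  by move=> k _; apply: approx_exp.
rewrite (@big_extend (fun k => (P ^+ k)`_m) m hm) // => k hk.
exact: coef_exp_small.
Qed.

Lemma approx_sum (F : nat -> fps R) (P : nat -> {poly R}) :
  (forall p, approx (F p) (P p)) -> (forall p m, (m < p)%N -> F p m = 0) ->
  approx (fps_sum F) (\sum_(0 <= p < N.+1) P p).
Proof.
move=> hF hz m hm; rewrite big_mkord coef_sum /fps_sum.
rewrite (eq_bigr (fun p : 'I_m.+1 => (P p)`_m)); last by move=> p _; apply: hF.
rewrite (@big_extend (fun p => (P p)`_m) m hm) // => k hk.
by rewrite -hF // hz.
Qed.

Lemma approx_prod (F : nat -> fps R) (P : nat -> {poly R}) a b :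
  (forall j, (a <= j < b)%N -> approx (F j) (P j)) ->
  approx (\big[@fps_mul _/fps_one _]_(a <= j < b) F j) (\prod_(a <= j < b) P j).
Proof.
move=> hF; rewrite big_nat_cond [X in approx _ X]big_nat_cond.
apply: (big_ind2 approx); first exact: approx_one.
  by move=> *; apply: approx_mul.
by move=> i /andP[h _]; apply: hF.
Qed.

End Approx.

Lemma approx_map (R S : nzRingType) (phi : R -> S) N f P : phi 0 = 0 ->
  approx N f P -> approx N (fps_map phi f) (map_poly phi P).
Proof. by move=> h0 hf m hm; rewrite coef_map_id0 // /fps_map hf. Qed.
Lemma tele (R : comNzRingType) (x : R) (M : nat) :
  \sum_(p < M) x ^+ (p ^ 2) * (1 - x ^+ p.+1) * (1 - x ^+ p.+2) * (1 - x ^+ (4 * p + 6))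
  = 1 - x ^+ 2 - x ^+ (M ^ 2) * (1 + (x ^+ M) ^+ 2 * x + (x ^+ M) ^+ 4 * x ^+ 4
      + (x ^+ M) ^+ 2 * x ^+ 3 - x ^+ M * x * (1 + x) - (x ^+ M) ^+ 3 * x ^+ 3 * (1 + x)).
Proof.
elim: M => [|M IH]; first by rewrite big_ord0 (_ : (0 ^ 2 = 0)%N) // !expr0; ring.
rewrite big_ord_recr /= IH.
have e1 : (M.+1 ^ 2 = M ^ 2 + M * 2 + 1)%N by lia.
have e2 : (4 * M + 6 = M * 4 + 6)%N by lia.
rewrite e1 e2 !exprD !exprM !exprS expr0 ?expr1.
ring.
Qed.

Section Cong.
Variable R : comNzRingType.
Variable N : nat.

Definition eqN (P Q : {poly R}) := forall m, (m <= N)%N -> P`_m = Q`_m.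

Lemma eqN_refl P : eqN P P. Proof. by []. Qed.
Lemma eqN_eq P Q : P = Q -> eqN P Q. Proof. by move=> ->. Qed.
Lemma eqN_sym P Q : eqN P Q -> eqN Q P. Proof. by move=> h m hm; rewrite h. Qed.
Lemma eqN_trans P Q S : eqN P Q -> eqN Q S -> eqN P S.
Proof. by move=> h1 h2 m hm; rewrite h1 // h2. Qed.
Lemma eqN_add P P' Q Q' : eqN P P' -> eqN Q Q' -> eqN (P + Q) (P' + Q').
Proof. by move=> h1 h2 m hm; rewrite !coefD h1 // h2. Qed.
Lemma eqN_opp P P' : eqN P P' -> eqN (- P) (- P').
Proof. by move=> h1 m hm; rewrite !coefN h1. Qed.
Lemma eqN_mul P P' Q Q' : eqN P P' -> eqN Q Q' -> eqN (P * Q) (P' * Q').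
Proof.
move=> h1 h2 m hm; rewrite !coefM; apply: eq_bigr => i _.
move: (ltn_ord i) => hi; rewrite h1 ?h2 //; lia.
Qed.
Lemma eqN_sum (I : finType) (F G : I -> {poly R}) : (forall p, eqN (F p) (G p)) ->
  eqN (\sum_(p : I) F p) (\sum_(p : I) G p).
Proof.
move=> h; apply: (big_ind2 eqN); [exact: eqN_refl | | by move=> i _; apply: h].
by move=> *; apply: eqN_add.
Qed.
Lemma eqN_high k Q : (N < k)%N -> eqN ('X^k * Q) 0.
Proof. by move=> hk m hm; rewrite coefXnM coef0; case: ifP => //; lia. Qed.
Lemma eqN_subhigh P k Q : (N < k)%N -> eqN (P - 'X^k * Q) P.
Proof.
move=> hk; rewrite -[X in eqN _ X]subr0; apply: eqN_add; first exact: eqN_refl.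
by apply: eqN_opp; apply: eqN_high.
Qed.

Definition xx : {poly R} := 'X^2.
Definition geo j := \sum_(k < N.+1) (xx ^+ j) ^+ k.

Lemma geo_id (y : {poly R}) n : (1 - y) * \sum_(k < n) y ^+ k = 1 - y ^+ n.
Proof.
elim: n => [|n IH]; first by rewrite big_ord0 mulr0 expr0 subrr.
by rewrite big_ord_recr /= mulrDr IH exprSr; ring.
Qed.

Lemma geo_inv j : (0 < j)%N -> eqN ((1 - xx ^+ j) * geo j) 1.
Proof.
move=> hj; rewrite /geo geo_id /xx -!exprM -[X in _ - X]mulr1.
apply: eqN_subhigh; nia.
Qed.

Lemma eqN_cancel P Q j : (0 < j)%N ->
  eqN (P * (1 - xx ^+ j)) (Q * (1 - xx ^+ j)) -> eqN P Q.
Proof.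
move=> hj h.
apply: (@eqN_trans _ (P * ((1 - xx ^+ j) * geo j))).
  rewrite -[X in eqN X _]mulr1; apply: eqN_mul; first exact: eqN_refl.
  by apply: eqN_sym; apply: geo_inv.
apply: (@eqN_trans _ (Q * ((1 - xx ^+ j) * geo j))); last first.
  rewrite -[X in eqN _ X]mulr1; apply: eqN_mul; first exact: eqN_refl.
  by apply: geo_inv.
rewrite !mulrA; apply: eqN_mul => //; exact: eqN_refl.
Qed.

Lemma prod_tele p :
  eqN (\prod_(1 <= j < p.+1) ((1 - xx ^+ j.+2) * geo j) * ((1 - xx) * (1 - xx ^+ 2)))
      ((1 - xx ^+ p.+1) * (1 - xx ^+ p.+2)).
Proof.
elim: p => [|p IH].
  by rewrite big_geq // mul1r expr1; exact: eqN_refl.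
rewrite big_nat_recr //=.
apply: (@eqN_trans _ (((\prod_(1 <= j < p.+1) ((1 - xx ^+ j.+2) * geo j))
   * ((1 - xx) * (1 - xx ^+ 2))) * ((1 - xx ^+ p.+3) * geo p.+1))).
  by apply: eqN_eq; ring.
apply: (@eqN_trans _ (((1 - xx ^+ p.+1) * (1 - xx ^+ p.+2)) * ((1 - xx ^+ p.+3) * geo p.+1))).
  by apply: eqN_mul => //; exact: eqN_refl.
apply: (@eqN_trans _ (((1 - xx ^+ p.+1) * geo p.+1) * ((1 - xx ^+ p.+2) * (1 - xx ^+ p.+3)))).
  by apply: eqN_eq; ring.
rewrite -[X in eqN _ X]mul1r; apply: eqN_mul; last exact: eqN_refl.
exact: geo_inv.
Qed.

Lemma main_cong :
  eqN (\sum_(p < N.+1) xx ^+ (p ^ 2) * ((1 - xx ^+ (4 * p + 6)) *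
          \prod_(1 <= j < p.+1) ((1 - xx ^+ j.+2) * geo j))) (geo 1).
Proof.
apply: (@eqN_cancel _ _ 1) => //; apply: (@eqN_cancel _ _ 2) => //.
apply: (@eqN_trans _ (1 - xx ^+ 2)); last first.
  apply: (@eqN_trans _ (((1 - xx ^+ 1) * geo 1) * (1 - xx ^+ 2))).
    rewrite -[X in eqN X _]mul1r; apply: eqN_mul; last exact: eqN_refl.
    by apply: eqN_sym; apply: geo_inv.
  by apply: eqN_eq; ring.
rewrite !mulr_suml.
apply: (@eqN_trans _ (\sum_(p < N.+1) xx ^+ (p ^ 2) * (1 - xx ^+ p.+1) * (1 - xx ^+ p.+2)
     * (1 - xx ^+ (4 * p + 6)))).
  apply: eqN_sum => p.
  apply: (@eqN_trans _ (xx ^+ (p ^ 2) * (1 - xx ^+ (4 * p + 6)) *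
     (\prod_(1 <= j < p.+1) ((1 - xx ^+ j.+2) * geo j) * ((1 - xx) * (1 - xx ^+ 2))))).
    by apply: eqN_eq; rewrite expr1; ring.
  apply: (@eqN_trans _ (xx ^+ (p ^ 2) * (1 - xx ^+ (4 * p + 6)) *
     ((1 - xx ^+ p.+1) * (1 - xx ^+ p.+2)))).
    by apply: eqN_mul; [exact: eqN_refl | exact: prod_tele].
  by apply: eqN_eq; ring.
rewrite tele.
have -> : xx ^+ (N.+1 ^ 2) = 'X^(2 * N.+1 ^ 2) by rewrite /xx -exprM.
apply: eqN_subhigh; nia.
Qed.

End Cong.

Lemma sgn_even k : (-1 : int) ^+ (2 * k) = 1.
Proof. by rewrite exprM (_ : (-1 : int) ^+ 2 = 1) ?expr1n. Qed.
Lemma sgn_odd k : (-1 : int) ^+ (2 * k + 1) = -1.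
Proof. by rewrite exprD sgn_even expr1 mul1r. Qed.

Lemma xx_pow k : 'X^(2 * k) = (@xx int) ^+ k.
Proof. by rewrite /xx -exprM. Qed.

Local Notation hm1 := (horner_eval (-1 : int)).

Lemma hmon (c : {poly int}) a : map_poly hm1 (c%:P * 'X^a) = (c.[-1])%:P * 'X^a.
Proof. by rewrite rmorphM /= map_polyC map_polyXn. Qed.

Lemma htp k : (t_pow k).[-1] = (-1) ^+ k.
Proof. by rewrite /t_pow hornerXn. Qed.

Theorem mainTheorem12 :
  forall n : nat, K_at_minus1 n = fps_inv1m (fps_mon 2 (1 : int)) n.
Proof.
move=> n.
set A : {poly {poly int}} := \sum_(0 <= p < n.+1)
  ((t_pow (2 * p * (p - 1)))%:P * 'X^(2 * p ^ 2)) *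
  ((1 + (t_pow (8 * p + 5))%:P * 'X^(8 * p + 12)) *
   \prod_(1 <= j < p.+1) ((1 + (t_pow (2 * j + 1))%:P * 'X^(2 * j + 4)) *
      \sum_(k < n.+1) ((t_pow (2 * j))%:P * 'X^(2 * j)) ^+ k)).
have hK : approx n K A.
  apply: approx_sum => [p|p m hm].
    apply: approx_mul; first exact: approx_mon.
    apply: approx_mul; first by apply: approx_add; [exact: approx_one | exact: approx_mon].
    apply: approx_prod => j /andP[hj _].
    apply: approx_mul; first by apply: approx_add; [exact: approx_one | exact: approx_mon].
    apply: approx_inv1m; first exact: approx_mon.
    by rewrite coefCM coefXn; case: eqP => [|_]; [lia | rewrite mulr0].
  rewrite /K_term /fps_mul big1 // => [[i hi]] _ /=.
  rewrite /fps_mon; case: eqP => [|_]; last by rewrite mul0r.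
  move=> e; exfalso; nia.
have hKm : approx n K_at_minus1 (map_poly hm1 A).
  by apply: approx_map => //; exact: horner0.
have hG : approx n (fps_inv1m (fps_mon 2 (1 : int))) (\sum_(k < n.+1) ((1 : int)%:P * 'X^2) ^+ k).
  apply: approx_inv1m; first exact: approx_mon.
  by rewrite coefCM coefXn mulr0.
rewrite hKm // hG //.
suff : eqN n (map_poly hm1 A) (\sum_(k < n.+1) ((1 : int)%:P * 'X^2) ^+ k) by apply.
have -> : \sum_(k < n.+1) ((1 : int)%:P * 'X^2) ^+ k = @geo int n 1.
  by rewrite /geo /xx polyC1 mul1r expr1.
apply: eqN_trans (@main_cong int n); apply: eqN_eq.
rewrite /A rmorph_sum big_mkord; apply: eq_bigr => p _.
rewrite rmorphM /= hmon rmorphM /= rmorphD /= rmorph1 hmon rmorph_prod /=.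
rewrite !htp -mulnA sgn_even polyC1 mul1r xx_pow.
have -> : (8 * p + 5 = 2 * (4 * p + 2) + 1)%N by lia.
have -> : (8 * p + 12 = 2 * (4 * p + 6))%N by lia.
rewrite sgn_odd xx_pow polyCN polyC1 mulN1r.
congr (_ * (_ * _)); apply: eq_bigr => j _.
rewrite rmorphM /= rmorphD /= rmorph1 hmon htp sgn_odd polyCN polyC1 mulN1r.
have -> : (2 * j + 4 = 2 * j.+2)%N by lia.
rewrite xx_pow rmorph_sum /= /geo; congr (_ * _); apply: eq_bigr => k _.
by rewrite rmorphXn /= hmon htp sgn_even polyC1 mul1r xx_pow.
Qed.
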